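(* Let $\mathcal N$ be a real normed space with norm $\|\cdot\|$ and origin $o$. Let $v_1,v_2\in\mathcal N$ and $\lambda_1,\lambda_2\geq 0$ be such that $\max\{\lambda_1,\lambda_2\}\geq 1$, $v_1\notin\operatorname{int}B(v_2,\lambda_2)$, $v_2\notin\operatorname{int}B(v_1,\lambda_1)$, and $B(v_i,\lambda_i)\cap B(o,1)\neq\emptyset$ for $i=1,2$. Define $\pi\colon\mathcal N\to B(o,2)$ by $\pi(x)=x$ if $\|x\|\leq 2$ and $\pi(x)=\frac{2}{\|x\|}x$ if $\|x\|\geq 2$. Then $\|\pi(v_1)-\pi(v_2)\|\geq 1$.
   Context: For $c\in\mathcal N$ and $r\geq 0$, $B(c,r)=\{x\in\mathcal N:\|x-c\|\leq r\}$ denotes the closed ball and $\operatorname{int}B(c,r)$ its interior. *)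

(* Defs.v *)
From HB Require Import structures.
From mathcomp Require Import all_boot all_order all_algebra.
From mathcomp Require Import all_classical all_reals all_analysis.
Set Implicit Arguments. Unset Strict Implicit. Unset Printing Implicit Defensive.
Import Order.TTheory GRing.Theory Num.Theory.
Import numFieldNormedType.Exports.
Local Open Scope classical_set_scope.
Local Open Scope ring_scope.

Definition cball {R : realType} {N : normedModType R} (c : N) (r : R) : set N :=
  [set x | `|x - c| <= r].

Definition proj2 {R : realType} {N : normedModType R} (x : N) : N :=
  if `|x| <= 2 then x else (2 / `|x|) *: x.

(* Main.v *)
Require Import Defs.
From HB Require Import structures.
From mathcomp Require Import all_boot all_order all_algebra.
From mathcomp Require Import all_classical all_reals all_analysis.
From mathcomp Require Import lra.
Import Order.TTheory GRing.Theory Num.Theory.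
Import numFieldNormedType.Exports.
Local Open Scope classical_set_scope.
Local Open Scope ring_scope.

Section Aux.
Context {R : realType} {N : normedModType R}.

Lemma tri3 (x y z : N) : `|x - y| - `|y - z| <= `|x - z|.
Proof.
have : `|x - y| <= `|x - z| + `|z - y|.
  by have := ler_normD (x - z) (z - y); rewrite addrA subrK.
by rewrite distrC [`|z - y|]distrC lerBlDr.
Qed.

Lemma tri (x y z : N) : `|x - z| <= `|x - y| + `|y - z|.
Proof. by have := ler_normD (x - y) (y - z); rewrite addrA subrK. Qed.

Lemma scale_dist (y : N) (c : R) : `|y - c *: y| = `|1 - c| * `|y|.
Proof. by rewrite -normrZ scalerBl scale1r. Qed.

Lemma dist_ge (v1 v2 : N) (l2 : R) :
  ~ interior (cball v2 l2) v1 -> l2 <= `|v1 - v2|.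
Proof.
move=> h; rewrite leNgt; apply/negP => lt; apply: h.
apply/nbhs_ballP; exists (l2 - `|v1 - v2|); first by rewrite /= subr_gt0.
move=> z; rewrite -ball_normE /ball_ /= /cball => hz.
have := tri z v1 v2; rewrite [`|v1 - z|]distrC in hz; rewrite /=; lra.
Qed.

Lemma norm_le (v : N) (l : R) : cball v l `&` cball 0 1 !=set0 -> `|v| <= 1 + l.
Proof.
move=> [x [hx]]; rewrite /cball /= subr0 => hx1; move: hx; rewrite /cball /= => hx.
have := tri v x 0; rewrite !subr0 distrC; lra.
Qed.

Lemma mixed (x y : N) : `|x| <= 2 -> 2 < `|y| -> `|y| <= 1 + `|x - y| ->
  1 <= `|x - (2 / `|y|) *: y|.
Proof.
move=> hx hy hd.
have := tri3 x y ((2 / `|y|) *: y); rewrite scale_dist.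
have -> : `|1 - 2 / `|y| | * `|y| = `|y| - 2.
  rewrite ger0_norm; last by rewrite subr_ge0 ler_pdivrMr; lra.
  rewrite mulrBl mul1r mulfVK //; lra.
lra.
Qed.

Lemma both (x y : N) : 2 < `|x| -> `|x| <= `|y| -> `|y| <= 1 + `|x - y| ->
  1 <= `|(2 / `|x|) *: x - (2 / `|y|) *: y|.
Proof.
move=> hx hxy hd.
have ha : 0 < `|x| by lra.
have hb : 0 < `|y| by lra.
have -> : (2 / `|x|) *: x - (2 / `|y|) *: y = (2 / `|x|) *: (x - (`|x| / `|y|) *: y).
  rewrite scalerBr scalerA; congr (_ - _ *: _).
  by rewrite mulrA divfK //; lra.
rewrite normrZ ger0_norm; last by rewrite divr_ge0 //; lra.
have := tri3 x y ((`|x| / `|y|) *: y); rewrite scale_dist.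
have -> : `|1 - `|x| / `|y| | * `|y| = `|y| - `|x|.
  rewrite ger0_norm; last by rewrite subr_ge0 ler_pdivrMr // mul1r.
  rewrite mulrBl mul1r divfK //; lra.
move=> h.
rewrite mulrAC ler_pdivlMr // mul1r.
lra.
Qed.

End Aux.

Theorem mainTheorem3 (R : realType) (N : normedModType R) (v1 v2 : N)
  (l1 l2 : R) (hl1 : 0 <= l1) (hl2 : 0 <= l2) (hmax : 1 <= Num.max l1 l2)
  (h1 : ~ interior (cball v2 l2) v1) (h2 : ~ interior (cball v1 l1) v2)
  (hi1 : cball v1 l1 `&` cball 0 1 !=set0)
  (hi2 : cball v2 l2 `&` cball 0 1 !=set0) :
  1 <= `|proj2 v1 - proj2 v2|.
Proof.
have d2 := dist_ge _ _ _ h1.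
have d1 := dist_ge _ _ _ h2; rewrite distrC in d1.
have n1 := norm_le _ _ hi1.
have n2 := norm_le _ _ hi2.
have dd : 1 <= `|v1 - v2|.
  move: hmax; rewrite /Num.max; case: ifP => _; lra.
have e1 : `|v1| <= 1 + `|v1 - v2| by lra.
have e2 : `|v2| <= 1 + `|v1 - v2| by lra.
rewrite /proj2; case: ifP => c1; case: ifP => c2 //.
- by apply: mixed => //; rewrite ltNge c2.
- rewrite distrC; apply: mixed => //; first by rewrite ltNge c1.
  by rewrite distrC.
- have c1' : 2 < `|v1| by rewrite ltNge c1.
  have c2' : 2 < `|v2| by rewrite ltNge c2.
  case: (lerP `|v1| `|v2|) => h.
    by apply: both.
  rewrite distrC; apply: both => //; first by lra.
  by rewrite distrC.
Qed.
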